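(* Let $\psi\in C^\infty(P)$ be strongly convex and, for $s\in\mathbb R$, let $g_s=g_P+s\psi$ with Hessian $H_s$ on $\check P$. Let $K$ be a compact subset of $\check P$. Then there exist $s_K\ge0$ and, for every $t<-s_K$, a negative-definite island $U^K_t$ of $g_t$ with $K\subset U^K_t$, such that $U^K_t\subseteq U^K_{t'}$ whenever $t'<t<-s_K$. Moreover $\bigcup_{t<-s_K}U^K_t=\check P$.
   Context: Let $P=\{x\in\mathbb R^n:\ell_j(x)=\langle\nu_j,x\rangle+\lambda_j\ge0,\ j=1,\dots,r\}$ be a Delzant polytope with interior $\check P$, and $g_P=\frac12\sum_{j=1}^r\ell_j\log\ell_j$ on $\check P$. Strongly convex means the Hessian of $\psi$ is positive definite on $P$. For $s\in\mathbb R$, a negative-definite island of $g_s$ is a connected component of the open set $\{x\in\check P: H_s(x)\text{ is negative definite}\}$. *)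

(* Defs.v *)
From HB Require Import structures.
From mathcomp Require Import all_boot all_order all_algebra.
From mathcomp Require Import all_classical all_reals all_analysis.
Set Implicit Arguments. Unset Strict Implicit. Unset Printing Implicit Defensive.
Import Order.TTheory GRing.Theory Num.Theory.
Import numFieldNormedType.Exports.
Local Open Scope classical_set_scope.
Local Open Scope ring_scope.

Section Defs.
Variable R : realType.
Variable n : nat.
Notation V := 'rV[R]_n.

Definition ebasis (i : 'I_n) : V := delta_mx 0 i.

Definition iter_partial (l : seq 'I_n) (f : V -> R) : V -> R :=
  foldr (fun i g => fun x => derive g x (ebasis i)) f l.

Definition smooth_on (U : set V) (f : V -> R) : Prop :=
  forall (l : seq 'I_n),
    (forall x, U x -> forall i, derivable (iter_partial l f) x (ebasis i)) /\
    (forall x, U x -> {for x, continuous (iter_partial l f)}).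

(* C^oo(P) for a closed set P : restriction of a function smooth on an open
   neighbourhood of P *)
Definition smooth_up_to (P : set V) (f : V -> R) : Prop :=
  exists U : set V, [/\ open U, P `<=` U & smooth_on U f].

Definition hessian (f : V -> R) (x : V) : 'M[R]_n :=
  \matrix_(i, j) derive (fun y => derive f y (ebasis i)) x (ebasis j).

Definition posdef (M : 'M[R]_n) : Prop :=
  M^T = M /\ forall v : V, v != 0 -> 0 < (v *m M *m v^T) 0 0.
Definition negdef (M : 'M[R]_n) : Prop :=
  M^T = M /\ forall v : V, v != 0 -> (v *m M *m v^T) 0 0 < 0.

Variable r : nat.
Variable nu : 'I_r -> 'rV[int]_n.
Variable lam : 'I_r -> R.

Definition ell (j : 'I_r) (x : V) : R :=
  \sum_(i < n) (nu j 0 i)%:~R * x 0 i + lam j.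

Definition polytope : set V := [set x | forall j, 0 <= ell j x].

Definition is_vertex (p : V) : Prop :=
  polytope p /\ ~ (exists q : V, q != 0 /\ polytope (p + q) /\ polytope (p - q)).

Definition active (p : V) : {set 'I_r} := [set j | ell j p == 0].

(* Delzant polytope given by (nu_j, lam_j):
   - P is bounded (hence compact),
   - the description is irredundant: each {l_j = 0} cuts out a facet,
   - each nu_j is a primitive integer vector,
   - at each vertex exactly n facets meet and their normals form a Z-basis
     of Z^n. *)
Definition delzant : Prop :=
  [/\ exists M : R, forall x, polytope x -> `|x| <= M,
      forall j, exists x : V, ell j x = 0 /\ forall k, k != j -> 0 < ell k x,
      forall j (d : int), (forall i, (d %| nu j ord0 i)%Z) -> `|d| = 1 &
      forall p, is_vertex p ->
        #|active p| = n /\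
        forall z : 'rV[int]_n, exists c : 'I_r -> int,
          z = \sum_(j in active p) c j *: nu j].

Definition gP (x : V) : R := 2^-1 * \sum_(j < r) ell j x * ln (ell j x).

Definition g_s (psi : V -> R) (s : R) (x : V) : R := gP x + s * psi x.

Definition negdef_region (psi : V -> R) (s : R) : set V :=
  [set x | (interior polytope) x /\ negdef (hessian (g_s psi s) x)].

Definition negdef_island (psi : V -> R) (s : R) (U : set V) : Prop :=
  exists x, negdef_region psi s x /\ U = connected_component (negdef_region psi s) x.

End Defs.

(* Main.v *)
Require Import Defs.
From HB Require Import structures.
From mathcomp Require Import all_boot all_order all_algebra.
From mathcomp Require Import all_classical all_reals all_analysis.
From mathcomp Require Import lra ring.
Import Order.TTheory GRing.Theory Num.Theory.
Import numFieldNormedType.Exports.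
Local Open Scope classical_set_scope.
Local Open Scope ring_scope.

Section S.
Variable R : realType.
Variable n : nat.
Notation V := 'rV[R]_n.
Variable r : nat.
Variable nu : 'I_r -> 'rV[int]_n.
Variable lam : 'I_r -> R.

Definition lin (j : 'I_r) (v : V) : R := \sum_(i < n) (nu j 0 i)%:~R * v 0 i.

Lemma ell_shift j h (v a : V) : ell nu lam j (h *: v + a) = ell nu lam j a + h * lin j v.
Proof.
rewrite /ell /lin mulr_sumr.
rewrite (eq_bigr (fun i => (nu j 0 i)%:~R * a 0 i + h * ((nu j 0 i)%:~R * v 0 i))); last first.
  by move=> i _; rewrite !mxE mulrDr mulrCA addrC.
by rewrite big_split /= addrAC.
Qed.

Lemma is_derive_affine (f : V -> R) a v c :
  (forall h, f (h *: v + a) = f a + h * c) -> is_derive a v f c.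
Proof.
move=> H.
have E : (fun h => h^-1 *: ((f \o shift a) (h *: v) - f a)) @ 0^' --> c.
  have e : {near 0^', cst c =1 (fun h : R => h^-1 *: ((f \o shift a) (h *: v) - f a))}.
    near=> h; rewrite /= H addrAC subrr add0r /GRing.scale /= mulrA mulVf ?mul1r //.
    near: h; exact: nbhs_dnbhs_neq.
  by apply: cvg_trans (near_eq_cvg e) _; exact: cvg_cst.
split; first by apply/cvg_ex; exists c.
exact: cvg_lim E.
Unshelve. all: by end_near. Qed.

Lemma is_derive_ell j a v : is_derive a v (ell nu lam j) (lin j v).
Proof. by apply: is_derive_affine => h; rewrite ell_shift. Qed.


Definition strict (x : V) := forall j, 0 < ell nu lam j x.

Lemma differentiable_ell j a : differentiable (ell nu lam j) a.
Proof.
have -> : ell nu lam j = \sum_(i < n) (fun y : V => (nu j 0 i)%:~R * y 0 i) + cst (lam j).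
  by apply/funext => y; rewrite /ell fct_sumE.
apply: differentiableD; last exact: differentiable_cst.
apply: differentiable_sum => i.
have -> : (fun y : V => (nu j 0 i)%:~R * y 0 i) = (nu j 0 i)%:~R *: (fun y : V => y 0 i).
  by apply/funext.
apply: differentiableZ; exact: differentiable_coord.
Qed.

Lemma chain_ln (f : V -> R) x v : differentiable f x -> 0 < f x ->
  is_derive x v (fun y => ln (f y)) ('D_v f x / f x).
Proof.
move=> df fx0.
have dl : differentiable (@ln R) (f x).
  apply/derivable1_diffP; apply: ex_derive; exact: is_derive1_ln.
have dc : differentiable ((@ln R) \o f) x by exact: differentiable_comp.
split; first exact: diff_derivable.
rewrite deriveE // diff_comp //= deriveE //.
rewrite deriv1E; last by apply: ex_derive; exact: is_derive1_ln.
rewrite /= derive1E.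
by have [_ ->] := is_derive1_ln fx0.
Qed.

Lemma is_derive_lnell j x v : 0 < ell nu lam j x ->
  is_derive x v (fun y => ln (ell nu lam j y)) (lin j v / ell nu lam j x).
Proof.
move=> h; have := @chain_ln (ell nu lam j) x v (differentiable_ell j x) h.
by rewrite (@derive_val _ _ _ _ _ _ _ (is_derive_ell j x v)).
Qed.

Definition Di (v y : V) : R := 2^-1 * \sum_(j < r) (lin j v * ln (ell nu lam j y) + lin j v).
Definition Fm (v w y : V) : R := 2^-1 * \sum_(j < r) lin j v * (lin j w / ell nu lam j y).

Lemma is_derive_gP x v : strict x -> is_derive x v (gP nu lam) (Di v x).
Proof.
move=> sx.
have -> : gP nu lam = 2^-1 \*: \sum_(j < r) (ell nu lam j * (fun y => ln (ell nu lam j y))).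
  by apply/funext => y; rewrite /gP /= fct_sumE.
apply: is_derive_eq.
apply: is_deriveZ; apply: is_derive_sum => j.
  apply: is_deriveM; [exact: is_derive_ell | exact: is_derive_lnell].
rewrite /Di /GRing.scale /=; congr (_ * _); apply: eq_bigr => j _.
rewrite /GRing.scale /= mulrCA divff ?mulr1 ?(gt_eqF (sx j)) //.
by rewrite addrC mulrC.
Qed.

Lemma is_derive_Di x v w : strict x -> is_derive x w (Di v) (Fm v w x).
Proof.
move=> sx.
have -> : Di v = 2^-1 \*: \sum_(j < r) ((cst (lin j v)) * (fun y => ln (ell nu lam j y)) + cst (lin j v)).
  by apply/funext => y; rewrite /Di /= fct_sumE.
apply: is_derive_eq.
apply: is_deriveZ; apply: is_derive_sum => j.
  apply: is_deriveD.
  apply: is_deriveM; exact: is_derive_lnell.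
rewrite /Fm /GRing.scale /=; congr (_ * _); apply: eq_bigr => j _.
by rewrite mulr0 !addr0.
Qed.


Lemma strict_near x : strict x -> \forall y \near x, strict y.
Proof.
move=> sx; have := @filter_forall _ _ (fun j y => 0 < ell nu lam j y) (nbhs x) _; apply => // j.
have c : ell nu lam j @ x --> ell nu lam j x.
  exact/differentiable_continuous/differentiable_ell.
exact: (cvgr_gt _ c _ (sx j)).
Qed.

Definition FM (y : V) : 'M[R]_n := \matrix_(i, k) Fm (ebasis R i) (ebasis R k) y.

Lemma hess_gs (psi : V -> R) t x : strict x ->
  (\forall y \near x, forall i, derivable psi y (ebasis R i)) ->
  (forall i k, derivable (fun y => derive psi y (ebasis R i)) x (ebasis R k)) ->
  hessian (g_s nu lam psi t) x = FM x + t *: hessian psi x.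
Proof.
move=> sx dpsi d2psi; apply/matrixP => i k; rewrite !mxE.
have E : \forall y \near x, derive (g_s nu lam psi t) y (ebasis R i) =
    Di (ebasis R i) y + t * derive psi y (ebasis R i).
  near=> y.
  have dy : forall i, derivable psi y (ebasis R i) by near: y.
  have sy : strict y by near: y; exact: strict_near.
  have -> : g_s nu lam psi t = gP nu lam + t \*: psi by apply/funext.
  apply: derive_val.
  apply: is_deriveD; first exact: is_derive_gP.
  apply: is_deriveZ; exact: derivableP.
rewrite (near_eq_derive _ E).
apply: derive_val.
apply: is_deriveD; first exact: is_derive_Di.
apply: is_deriveZ; exact: derivableP.
Unshelve. all: by end_near. Qed.


Definition qf (M : 'M[R]_n) (v : V) : R := (v *m M *m v^T) 0 0.

Lemma qfE M v : qf M v = \sum_(i < n) \sum_(k < n) v 0 i * M i k * v 0 k.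
Proof.
rewrite /qf !mxE.
rewrite (eq_bigr (fun k => \sum_(i < n) v 0 i * M i k * v 0 k)); last first.
  move=> k _; rewrite !mxE mulr_suml.
  by [].
exact: exchange_big.
Qed.

Lemma cvg_sumR (T : Type) (F : set_system T) {FF : Filter F} (m : nat)
  (f : 'I_m -> T -> R) (a : 'I_m -> R) :
  (forall i, f i x @[x --> F] --> a i) -> (\sum_(i < m) f i x) @[x --> F] --> \sum_(i < m) a i.
Proof.
move=> H; apply: (@cvg_big _ _ +%R 0 xpredT) => //.
exact: add_continuous.
Qed.

Lemma cont_snd_coord (x v : V) i : (fun p : V * V => p.2 0 i) @ (x, v) --> v 0 i.
Proof.
apply: (@continuous_comp _ _ _ snd (fun w : V => w 0 i) (x, v)).
  exact: cvg_snd.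
exact: coord_continuous.
Qed.

Lemma cont_qf (Mf : V -> 'M[R]_n) x v :
  (forall i k, (fun y => Mf y i k) @ x --> Mf x i k) ->
  (fun p : V * V => qf (Mf p.1) p.2) @ (x, v) --> qf (Mf x) v.
Proof.
move=> H; rewrite qfE.
under eq_cvg do rewrite qfE.
apply: cvg_sumR => i; apply: cvg_sumR => k.
apply: cvgM; last exact: cont_snd_coord.
apply: cvgM; first exact: cont_snd_coord.
apply: (@continuous_comp _ _ _ fst (fun y => Mf y i k) (x, v)).
  exact: cvg_fst.
exact: H.
Qed.


Lemma cvgMlV (x : V) (f : V -> R) a b : f @ x --> b -> (fun y => a * f y) @ x --> a * b.
Proof. move=> h; exact: (@cvgMl_tmp R V (nbhs x) _ f a b h). Qed.

Lemma cvg_sumV (x : V) (m : nat) (f : 'I_m -> V -> R) (a : 'I_m -> R) :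
  (forall i, f i @ x --> a i) -> (fun y => \sum_(i < m) f i y) @ x --> \sum_(i < m) a i.
Proof. move=> h; exact: (@cvg_sumR V (nbhs x) _ m f a h). Qed.

Lemma cvgVV (x : V) (f : V -> R) b : b != 0 -> f @ x --> b -> (fun y => (f y)^-1) @ x --> b^-1.
Proof. move=> b0 h; exact: (@cvgV R V (nbhs x) _ f b b0 h). Qed.

Lemma cont_FM x i k : strict x -> (fun y => FM y i k) @ x --> FM x i k.
Proof.
move=> sx.
have -> : (fun y => FM y i k) = (fun y => 2^-1 * \sum_(j < r) lin j (ebasis R i) * (lin j (ebasis R k) / ell nu lam j y)).
  by apply/funext => y; rewrite mxE.
rewrite [FM x i k]mxE /Fm.
apply: cvgMlV.
apply: cvg_sumV => j.
apply: cvgMlV; apply: cvgMlV.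
apply: cvgVV; first by rewrite gt_eqF // sx.
exact/differentiable_continuous/differentiable_ell.
Qed.

Lemma sphere_compact : compact [set v : V | `|v| = 1].
Proof.
apply: bounded_closed_compact.
  exists 1; split; first exact: num_real.
  by move=> M M1 v /= ->; exact: ltW.
have -> : [set v : V | `|v| = 1] = (@Num.norm _ V) @^-1` [set 1] by [].
apply: preimage_closed; last exact: closed_eq.
move=> v _; exact: norm_continuous.
Qed.


Lemma unif (Hp : V -> 'M[R]_n) (C : set V) : compact C -> C `<=` strict ->
  (forall y, strict y -> forall v : V, v != 0 -> 0 < qf (Hp y) v) ->
  (forall y, strict y -> forall i k, (fun z => Hp z i k) @ y --> Hp y i k) ->
  \forall t \near -oo, forall y, C y -> forall v : V, `|v| = 1 ->
     qf (FM y) v + t * qf (Hp y) v < 0.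
Proof.
move=> cC sC pd cH.
have cpt := compact_setX cC sphere_compact.
move/compact_near_coveringP : cpt => /(_ R (ninfty_nbhs R)
  (fun t p => qf (FM p.1) p.2 + t * qf (Hp p.1) p.2 < 0) _) H.
have {}H : \forall t \near -oo, C `*` [set v | `|v| = 1] `<=`
    (fun p : V * V => qf (FM p.1) p.2 + t * qf (Hp p.1) p.2 < 0).
  apply: H => -[x v0] [/= Cx nv0].
  have sx := sC _ Cx.
  have v00 : v0 != 0.
    by apply/eqP => v00; move: nv0; rewrite v00 normr0 => /eqP; rewrite eq_sym oner_eq0.
  set a := qf (Hp x) v0; set b := qf (FM x) v0.
  have a0 : 0 < a by exact: pd.
  have h1 : \forall p \near (x, v0), a / 2 < qf (Hp p.1) p.2.
    apply: (cvgr_gt _ (@cont_qf Hp x v0 (cH x sx))).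
    by rewrite ltr_pdivrMr // ltr_pMr // ltr1n.
  have h2 : \forall p \near (x, v0), qf (FM p.1) p.2 < b + 1.
    apply: (cvgr_lt _ (@cont_qf FM x v0 (fun i k => @cont_FM x i k sx))).
    by rewrite ltrDl.
  near=> p t; rewrite /=.
  have q1 : a / 2 < qf (Hp p.1) p.2 by near: p.
  have q2 : qf (FM p.1) p.2 < b + 1 by near: p.
  have tM : t < - (2 * (`|b| + 1)) / a.
    by near: t; apply: nbhs_ninfty_lt; rewrite num_real.
  have M0 : - (2 * (`|b| + 1)) / a < 0.
    by rewrite mulNr oppr_lt0 divr_gt0 // mulr_gt0 // ltr_wpDl.
  have t0 : t < 0 by apply: lt_trans M0.
  have ta : t * a < - (2 * (`|b| + 1)).
    by move: tM; rewrite ltr_pdivlMr.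
  have bb : b <= `|b| by exact: ler_norm.
  set u := qf (Hp p.1) p.2 in q1 *; set w := qf (FM p.1) p.2 in q2 *.
  nra.
apply: filterS H => t Ht y Cy v nv; exact: (Ht (y, v)).
Unshelve. all: by end_near. Qed.


Lemma lin_e j i : lin j (ebasis R i) = (nu j 0 i)%:~R.
Proof.
rewrite /lin (bigD1 i) //= big1 => [|k ki]; rewrite /ebasis mxE.
  by rewrite !eqxx mulr1 addr0.
by rewrite (negbTE ki) andbF mulr0.
Qed.

Lemma linB j (a b : V) : lin j (a - b) = lin j a - lin j b.
Proof.
rewrite /lin -sumrB; apply: eq_bigr => i _; by rewrite !mxE mulrBr.
Qed.

Lemma linZ j c (a : V) : lin j (c *: a) = c * lin j a.
Proof.
rewrite /lin mulr_sumr; apply: eq_bigr => i _; by rewrite !mxE mulrCA.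
Qed.

Lemma ellE j a : ell nu lam j a = lin j a + lam j.
Proof. by []. Qed.

Lemma line_near (x v : V) (P : V -> Prop) : (\forall y \near x, P y) ->
  exists e, 0 < e /\ forall h : R, `|h| < e -> P (h *: v + x).
Proof.
move=> Px.
have c : (fun h : R => h *: v + x) @ 0 --> 0 *: v + x.
  apply: cvgD; [exact: scalel_continuous | exact: cvg_cst].
rewrite scale0r add0r in c.
have := c _ Px.
move=> /nbhs_ballP [e /= e0 He]; exists e; split => // h he.
apply: He; rewrite /ball /= sub0r normrN //.
Qed.


Lemma strict_interior x : strict x -> interior (polytope nu lam) x.
Proof.
move=> sx; have := @strict_near x sx.
apply: filterS => y sy j; exact: ltW.
Qed.

Lemma interior_strict x : (forall j, exists i, nu j 0 i != 0) ->
  interior (polytope nu lam) x -> strict x.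
Proof.
move=> nz ix j.
have px : polytope nu lam x := nbhs_singleton ix.
rewrite lt_neqAle (px j) andbT; apply/eqP => e0.
have [i ni] := nz j.
set c : R := (nu j 0 i)%:~R.
have c0 : c != 0 by rewrite intr_eq0.
have [e [e0p He]] := @line_near x (ebasis R i) _ ix.
have key : forall h, `|h| < e -> 0 <= h * c.
  move=> h /He /(_ j); by rewrite ell_shift -e0 add0r lin_e.
have he : `|e / 2| < e by rewrite gtr0_norm ?divr_gt0 // ltr_pdivrMr // ltr_pMr // ltr1n.
have hne : `|- (e / 2)| < e by rewrite normrN.
case: (ltgtP c 0) => [cn|cp|/eqP]; last by rewrite (negbTE c0).
  have := key _ he; rewrite pmulr_rge0 ?divr_gt0 //; by rewrite leNgt cn.
have := key _ hne; rewrite mulNr oppr_ge0 pmulr_rle0 ?divr_gt0 //; by rewrite leNgt cp.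
Qed.

Lemma exists_strict : (forall j, exists x : V, ell nu lam j x = 0 /\
     forall k, k != j -> 0 < ell nu lam k x) ->
  (forall j, exists i, nu j 0 i != 0) -> exists x, strict x.
Proof.
move=> facet nz.
case: (posnP r) => [r0|rp].
  by exists 0 => j; exfalso; move: (ltn_ord j); rewrite [X in (_ < X)%N]r0.
pose j0 := Ordinal rp.
have [x [e0 ek]] := facet j0.
have [i ni] := nz j0.
set c : R := (nu j0 0 i)%:~R.
have c0 : c != 0 by rewrite intr_eq0.
have nx : \forall y \near x, forall k, k != j0 -> 0 < ell nu lam k y.
  have := @filter_forall _ _ (fun k y => k != j0 -> 0 < ell nu lam k y) (nbhs x) _.
  apply => // k; case: (eqVneq k j0) => [->|kj]; first by near=> y => /eqP.
  have cc : ell nu lam k @ x --> ell nu lam k x.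
    exact/differentiable_continuous/differentiable_ell.
  by apply: filterS (cvgr_gt _ cc _ (ek k kj)) => y yp _.
have [e [e0p He]] := @line_near x (c *: ebasis R i) _ nx.
exists ((e / 2) *: (c *: ebasis R i) + x) => k.
case: (eqVneq k j0) => [->|kj]; last first.
  apply: He => //; by rewrite gtr0_norm ?divr_gt0 // ltr_pdivrMr // ltr_pMr // ltr1n.
rewrite ell_shift e0 add0r linZ lin_e -/c.
have cc : 0 < c * c by rewrite -expr2 lt0r sqr_ge0 andbT expf_eq0 /= c0.
by rewrite mulr_gt0 // divr_gt0.
Unshelve. all: by end_near. Qed.


Lemma qf_addZ (A B : 'M[R]_n) t v : qf (A + t *: B) v = qf A v + t * qf B v.
Proof.
rewrite !qfE mulr_sumr -big_split; apply: eq_bigr => i _.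
rewrite mulr_sumr -big_split; apply: eq_bigr => k _.
rewrite !mxE /=; ring.
Qed.

Lemma qfZ (A : 'M[R]_n) c v : qf A (c *: v) = c ^+ 2 * qf A v.
Proof.
rewrite !qfE mulr_sumr; apply: eq_bigr => i _.
rewrite mulr_sumr; apply: eq_bigr => k _.
by rewrite !mxE; ring.
Qed.

Lemma negdef_of (M : 'M[R]_n) : M^T = M -> (forall v : V, `|v| = 1 -> qf M v < 0) ->
  negdef M.
Proof.
move=> sym H; split => // v v0.
have nv : 0 < `|v| by rewrite normr_gt0.
have -> : v = `|v| *: (`|v|^-1 *: v) by rewrite scalerA divff ?scale1r // gt_eqF.
rewrite -/(qf M _) qfZ pmulr_rlt0 ?exprn_gt0 //.
apply: H; rewrite normrZ normrV ?unitfE ?gt_eqF // normr_id mulVf // gt_eqF //.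
Qed.

Lemma FM_sym y : (FM y)^T = FM y.
Proof.
apply/matrixP => i k; rewrite !mxE /Fm; congr (_ * _); apply: eq_bigr => j _.
by ring.
Qed.


Definition phi (x0 : V) (p : V * R) : V := p.2 *: (p.1 - x0) + x0.

Lemma phi_cont x0 : continuous (phi x0).
Proof.
move=> p; apply: cvgD; last exact: cvg_cst.
apply: cvgZ; first exact: cvg_snd.
apply: cvgB; [exact: cvg_fst | exact: cvg_cst].
Qed.

Definition star x0 (K0 : set V) := phi x0 @` ((K0 `|` [set x0]) `*` `[0, 1]%classic).

Lemma star_compact x0 K0 : compact K0 -> compact (star x0 K0).
Proof.
move=> cK; apply: continuous_compact.
  by apply: continuous_subspaceT; exact: phi_cont.
apply: compact_setX; last exact: segment_compact.
apply: compactU => //; exact: compact_set1.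
Qed.

Lemma star_strict x0 K0 : strict x0 -> K0 `<=` strict -> star x0 K0 `<=` strict.
Proof.
move=> s0 sK _ [[k th] [/= Kk th01]] <- j.
move: th01; rewrite in_itv /= => /andP[t0 t1].
rewrite /phi /= ell_shift linB.
have sk : 0 < ell nu lam j k by case: Kk => [/sK //| ->].
move: sk (s0 j); rewrite !ellE => a b.
have h2 : 0 <= th * (lin j k + lam j) by rewrite mulr_ge0 // ltW.
case: (ltP th 1) => t1'.
  have h1 : 0 < (1 - th) * (lin j x0 + lam j) by rewrite mulr_gt0 // subr_gt0.
  lra.
have -> : th = 1 by apply/eqP; rewrite eq_le t1 t1'.
lra.
Qed.


Definition seg x0 (k : V) := (fun th : R => phi x0 (k, th)) @` `[0, 1]%classic.

Lemma seg_conn x0 k : connected (seg x0 k).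
Proof.
apply: connected_continuous_connected; first exact: segment_connected.
apply: continuous_subspaceT => th.
apply: cvgD; [exact: scalel_continuous | exact: cvg_cst].
Qed.

Lemma seg_star x0 K0 k : K0 k -> seg x0 k `<=` star x0 K0.
Proof. by move=> Kk _ [th th01 <-]; exists (k, th) => //; split => //; left. Qed.

Lemma seg_x0 x0 k : seg x0 k x0.
Proof.
exists 0; last by rewrite /phi /= scale0r add0r.
by rewrite /= in_itv /= lexx ler01.
Qed.

Lemma seg_k x0 k : seg x0 k k.
Proof.
exists 1; last by rewrite /phi /= scale1r subrK.
by rewrite /= in_itv /= lexx ler01.
Qed.

Lemma x0_star x0 K0 : star x0 K0 x0.
Proof.
exists (x0, 0); last by rewrite /phi /= scale0r add0r.
split; first by right.
by rewrite /= in_itv /= lexx ler01.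
Qed.


Lemma mono_aux (a b t t' : R) : t' < t -> 0 < a -> b + t * a < 0 -> b + t' * a < 0.
Proof.
move=> tt a0 h; have : t' * a < t * a by rewrite ltr_pM2r.
lra.
Qed.

Lemma main_sec (psi : V -> R) (K : set V) :
  delzant nu lam ->
  smooth_up_to (polytope nu lam) psi ->
  (forall x, polytope nu lam x -> posdef (hessian psi x)) ->
  compact K -> K `<=` interior (polytope nu lam) ->
  exists sK : R, 0 <= sK /\
    exists U : R -> set V,
      [/\ (forall t, t < - sK -> negdef_island nu lam psi t (U t) /\ K `<=` U t),
          (forall t t', t' < t -> t < - sK -> U t `<=` U t') &
          \bigcup_(t in [set t | t < - sK]) U t = interior (polytope nu lam)].
Proof.
move=> [_ facet prim _] [W [oW PW smW]] hP cK KI.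
have nz : forall j, exists i, nu j 0 i != 0.
  move=> j; apply: contrapT => /forallNP H.
  have h0 : forall i, (0 %| nu j ord0 i)%Z.
    by move=> i; have := H i; move/negP/negPn/eqP => ->; exact: dvdz0.
  have := prim j 0 h0; rewrite normr0 => /eqP; by rewrite eq_sym oner_eq0.
have [x0 s0] := exists_strict facet nz.
have Wn : forall y, strict y -> \forall z \near y, W z.
  move=> y sy; apply: open_nbhs_nbhs; split => //; apply: PW => j; exact: ltW.
have Wy : forall y, strict y -> W y by move=> y /Wn /nbhs_singleton.
have hess : forall t y, strict y -> hessian (g_s nu lam psi t) y = FM y + t *: hessian psi y.
  move=> t y sy; apply: hess_gs => //.
    by apply: filterS (Wn y sy) => z Wz i; exact: ((smW [::]).1 z Wz i).
  by move=> i k; exact: ((smW [:: i]).1 y (Wy y sy) k).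
have cH : forall y, strict y -> forall i k, (fun z => hessian psi z i k) @ y --> hessian psi y i k.
  move=> y sy i k.
  have -> : (fun z => hessian psi z i k) = iter_partial [:: k; i] psi.
    by apply/funext => z; rewrite mxE.
  rewrite [hessian psi y i k]mxE.
  exact: ((smW [:: k; i]).2 y (Wy y sy)).
have pd : forall y, strict y -> forall v : V, v != 0 -> 0 < qf (hessian psi y) v.
  move=> y sy v v0; apply: (hP y _).2 => //; move=> j; exact: ltW.
have Hsym : forall y, strict y -> (hessian psi y)^T = hessian psi y.
  move=> y sy; apply: (hP y _).1 => //; move=> j; exact: ltW.
have symt : forall t y, strict y -> (FM y + t *: hessian psi y)^T = FM y + t *: hessian psi y.
  move=> t y sy.
  by rewrite linearD /= linearZ /= FM_sym Hsym.
have unifC : forall C : set V, compact C -> C `<=` strict ->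
    exists M : R, forall t, t < M -> C `<=` negdef_region nu lam psi t.
  move=> C cC sC.
  have [M [_ HM]] := @unif (hessian psi) C cC sC pd cH.
  exists M => t tM y Cy; have sy := sC y Cy.
  split; first exact: strict_interior.
  rewrite hess //; apply: negdef_of; first exact: symt.
  by move=> v nv; rewrite qf_addZ; exact: HM.
have mono : forall t t', t' < t ->
    negdef_region nu lam psi t `<=` negdef_region nu lam psi t'.
  move=> t t' tt y [iy [_ nd]].
  have sy := @interior_strict y nz iy.
  split; first exact: iy.
  rewrite (hess t' y sy); split; first exact: symt.
  move=> v v0; have := nd v v0; rewrite (hess t y sy).
  rewrite -[X in X < 0 -> _]/(qf _ v) -[X in X < 0]/(qf _ v) !qf_addZ.
  move=> h; suff : qf (FM y + t' *: hessian psi y) v < 0 by [].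
  rewrite qf_addZ; apply: mono_aux h; [exact: tt | exact: pd].
have sKs : K `<=` strict by move=> y /KI; exact: (@interior_strict y nz).
have [M HM] := unifC _ (@star_compact x0 K cK) (@star_strict x0 K s0 sKs).
exists (Num.max 0 (- M)); split; first by rewrite le_max lexx.
have tM : forall t, t < - Num.max 0 (- M) -> t < M.
  move=> t ht; apply: lt_le_trans ht _; rewrite lerNl le_max lexx orbT //.
exists (fun t => connected_component (negdef_region nu lam psi t) x0); split.
- move=> t ht; have st := HM t (tM t ht).
  split; first by exists x0; split; [apply: st; exact: x0_star | by []].
  move=> k Kk.
  apply: (@connected_component_max _ _ (seg x0 k)).
  + exact: seg_x0.
  + by move=> z /(@seg_star x0 K k Kk) /st.
  + exact: seg_conn.
  + exact: seg_k.
- move=> t t' tt' ht.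
  apply: connected_component_max.
  + apply: connected_component_refl; apply: (HM t (tM t ht)); exact: x0_star.
  + by move=> z /connected_component_sub /(mono _ _ tt').
  + exact: component_connected.
- apply/seteqP; split.
    by move=> y [t _ /connected_component_sub []].
  move=> y iy; have sy := @interior_strict y nz iy.
  have sys : [set y] `<=` strict by move=> z ->.
  have [M' HM'] := unifC _ (@star_compact x0 [set y] (@compact_set1 _ y)) (@star_strict x0 [set y] s0 sys).
  set t := Num.min M' (- Num.max 0 (- M)) - 1.
  have tlt : t < Num.min M' (- Num.max 0 (- M)) by rewrite /t ltrBlDr ltrDl.
  have t1 : t < M' by apply: lt_le_trans tlt _; rewrite ge_min lexx.
  have t2 : t < - Num.max 0 (- M) by apply: lt_le_trans tlt _; rewrite ge_min lexx orbT.
  exists t => //=.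
  apply: (@connected_component_max _ _ (seg x0 y)).
  + exact: seg_x0.
  + by move=> z /(@seg_star x0 [set y] y erefl) /(HM' t t1).
  + exact: seg_conn.
  + exact: seg_k.
Qed.

End S.

Theorem mainTheorem8 (R : realType) (n r : nat)
  (nu : 'I_r -> 'rV[int]_n) (lam : 'I_r -> R) (psi : 'rV[R]_n -> R)
  (K : set 'rV[R]_n) :
  delzant nu lam ->
  smooth_up_to (polytope nu lam) psi ->
  (forall x, polytope nu lam x -> posdef (hessian psi x)) ->
  compact K -> K `<=` interior (polytope nu lam) ->
  exists sK : R, 0 <= sK /\
    exists U : R -> set 'rV[R]_n,
      [/\ (forall t, t < - sK -> negdef_island nu lam psi t (U t) /\ K `<=` U t),
          (forall t t', t' < t -> t < - sK -> U t `<=` U t') &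
          \bigcup_(t in [set t | t < - sK]) U t = interior (polytope nu lam)].
Proof. exact: main_sec. Qed.
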